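(* Let $p$ be a prime, $G$ a virtually free pro-$p$ group and $F$ an open normal free pro-$p$ subgroup of $G$, and suppose $C_F(t)=1$ for every torsion element $t\in G$. Then any two distinct maximal finite subgroups $A\neq B$ of $G$ satisfy $A\cap B=1$.
   Context: $C_F(t)$ denotes the centralizer of $t$ in $F$. *)

(* Defs.v *)
From HB Require Import structures.
From mathcomp Require Import all_boot all_order all_algebra.
From mathcomp Require Import all_classical all_reals all_analysis.
Set Implicit Arguments. Unset Strict Implicit. Unset Printing Implicit Defensive.
Import Order.TTheory GRing.Theory Num.Theory.
Local Open Scope classical_set_scope.

Record TopGroup := {
  tg_car :> topologicalType;
  tg_mul : tg_car -> tg_car -> tg_car;
  tg_inv : tg_car -> tg_car;
  tg_one : tg_car;
  tg_mulA : forall x y z, tg_mul x (tg_mul y z) = tg_mul (tg_mul x y) z;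
  tg_mul1g : forall x, tg_mul tg_one x = x;
  tg_mulVg : forall x, tg_mul (tg_inv x) x = tg_one;
  tg_mul_cont : continuous (fun xy : tg_car * tg_car => tg_mul xy.1 xy.2);
  tg_inv_cont : continuous tg_inv
}.

Arguments tg_mul {t}.
Arguments tg_inv {t}.
Arguments tg_one {t}.

Section Defs.
Variable G : TopGroup.

Fixpoint tg_pow (x : G) (n : nat) : G :=
  match n with 0 => tg_one | n.+1 => tg_mul x (tg_pow x n) end.

Definition is_subgroup (H : set G) : Prop :=
  H tg_one /\ (forall x y, H x -> H y -> H (tg_mul x y)) /\
  (forall x, H x -> H (tg_inv x)).

Definition normal_sub (N H : set G) : Prop :=
  is_subgroup N /\ N `<=` H /\
  forall x n, H x -> N n -> N (tg_mul (tg_mul x n) (tg_inv x)).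

Definition rel_open (H N : set G) : Prop :=
  exists U : set G, open U /\ N = H `&` U.

(** The index [H : N] is finite and a power of p. *)
Definition ppow_index (p : nat) (H N : set G) : Prop :=
  exists (k : nat) (c : G -> 'I_(p ^ k)),
    (forall i, exists x, H x /\ c x = i) /\
    (forall x y, H x -> H y -> (c x = c y <-> N (tg_mul (tg_inv x) y))).

Definition profinite : Prop :=
  compact [set: G] /\ hausdorff_space G /\ totally_disconnected [set: G].

Definition pro_p_sub (p : nat) (H : set G) : Prop :=
  is_subgroup H /\ closed H /\
  forall N, normal_sub N H -> rel_open H N -> ppow_index p H N.

Definition pro_p (p : nat) : Prop := profinite /\ pro_p_sub p [set: G].

Definition conv_to_one (T : Type) (K : TopGroup) (X : set T) (f : T -> K) :=
  forall V : set K, open V -> V tg_one -> finite_set [set x | X x /\ ~ V (f x)].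

Definition hom_on (K : TopGroup) (H : set G) (phi : G -> K) : Prop :=
  forall x y, H x -> H y -> phi (tg_mul x y) = tg_mul (phi x) (phi y).

End Defs.

Arguments tg_pow {G}.

Definition free_pro_p_sub (p : nat) (G : TopGroup) (F : set G) : Prop :=
  pro_p_sub p F /\
  exists X : set G, X `<=` F /\ conv_to_one X (fun x : G => x) /\
   forall (K : TopGroup), pro_p K p -> forall f : G -> K, conv_to_one X f ->
     exists phi : G -> K,
       ({within F, continuous phi} /\ hom_on F phi /\ (forall x, X x -> phi x = f x)) /\
       forall psi : G -> K,
         {within F, continuous psi} -> hom_on F psi -> (forall x, X x -> psi x = f x) ->
         forall x, F x -> psi x = phi x.

Definition virtually_free_pro_p (p : nat) (G : TopGroup) : Prop :=
  pro_p G p /\ exists F : set G, is_subgroup F /\ open F /\ free_pro_p_sub p F.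

Definition torsion (G : TopGroup) (t : G) : Prop :=
  exists n, (0 < n)%N /\ tg_pow t n = tg_one.

Definition centralizer (G : TopGroup) (F : set G) (t : G) : set G :=
  [set x | F x /\ tg_mul x t = tg_mul t x].

Definition finite_subgroup (G : TopGroup) (A : set G) : Prop :=
  is_subgroup A /\ finite_set A.

Definition maximal_finite_subgroup (G : TopGroup) (A : set G) : Prop :=
  finite_subgroup A /\ forall B, finite_subgroup B -> A `<=` B -> B = A.

(* Main.v *)
Require Import Defs.
From HB Require Import structures.
From mathcomp Require Import all_boot all_order all_algebra.
From mathcomp Require Import all_classical all_reals all_analysis.
From mathcomp Require Import all_fingroup all_solvable.
Import Defs.
Set Implicit Arguments. Unset Strict Implicit. Unset Printing Implicit Defensive.
Local Open Scope classical_set_scope.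

Section Basic.
Variable G : TopGroup.
Local Notation "x ** y" := (@tg_mul G x y) (at level 40, left associativity).
Local Notation "x ^^-1" := (@tg_inv G x) (at level 3).
Local Notation one := (@tg_one G).

Lemma tmulgV (x : G) : x ** x^^-1 = one.
Proof.
set y := x^^-1.
have -> : x ** y = (y^^-1 ** y) ** (x ** y) by rewrite tg_mulVg tg_mul1g.
by rewrite -tg_mulA (tg_mulA y x y) tg_mulVg tg_mul1g tg_mulVg.
Qed.
Lemma tmulg1 (x : G) : x ** one = x.
Proof. by rewrite -(tg_mulVg x) tg_mulA tmulgV tg_mul1g. Qed.
Lemma tinvK (x : G) : (x^^-1)^^-1 = x.
Proof.
by rewrite -[LHS]tmulg1 -(tg_mulVg x) tg_mulA tg_mulVg tg_mul1g.
Qed.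
Lemma tmulKg (x y : G) : x^^-1 ** (x ** y) = y.
Proof. by rewrite tg_mulA tg_mulVg tg_mul1g. Qed.
Lemma tmulKVg (x y : G) : x ** (x^^-1 ** y) = y.
Proof. by rewrite tg_mulA tmulgV tg_mul1g. Qed.
Lemma tmulgK (x y : G) : (y ** x) ** x^^-1 = y.
Proof. by rewrite -tg_mulA tmulgV tmulg1. Qed.
Lemma tmulgKV (x y : G) : (y ** x^^-1) ** x = y.
Proof. by rewrite -tg_mulA tg_mulVg tmulg1. Qed.
Lemma tinvM (x y : G) : (x ** y)^^-1 = y^^-1 ** x^^-1.
Proof.
apply: (can_inj (tmulKg (x ** y))).
by rewrite tmulgV -tg_mulA tmulKVg tmulgV.
Qed.
Lemma tinv1 : one^^-1 = one.
Proof. by rewrite -[LHS]tg_mul1g tmulgV. Qed.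
Lemma tmulIg (x y z : G) : y ** x = z ** x -> y = z.
Proof. by move=> h; rewrite -(tmulgK x y) h tmulgK. Qed.
Lemma tpowD (x : G) m n : tg_pow x (m + n) = tg_pow x m ** tg_pow x n.
Proof. by elim: m => [|m IH] /=; rewrite ?tg_mul1g // IH tg_mulA. Qed.
End Basic.
From mathcomp Require Import zify finmap.

Lemma pigeon_seq (T : eqType) (s : seq T) (f : nat -> T) :
  (forall m, f m \in s) -> exists i j, (i < j)%N /\ f i = f j.
Proof.
move=> fs; pose N := size s.
have hlt : forall i, (index (f i) s < N)%N by move=> i; rewrite index_mem.
pose h : 'I_N.+1 -> 'I_N := fun i => Ordinal (hlt i).
have : ~~ injectiveb h.
  apply/negP => /injectiveP hi; have := leq_card h hi.
  by rewrite !card_ord ltnn.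
case/injectivePn => x [y] xy /(congr1 val) /= eqi.
have eqf : f x = f y by rewrite -(nth_index (f x) (fs x)) eqi nth_index.
case: (ltngtP x y) => [lt|gt|eq].
- by exists x, y.
- by exists y, x.
- by move: xy; rewrite (val_inj eq) eqxx.
Qed.

Section Main.
Variables (p : nat) (G : TopGroup) (F : set G).
Local Notation "x ** y" := (@tg_mul G x y) (at level 40, left associativity).
Local Notation "x ^^-1" := (@tg_inv G x) (at level 3).
Local Notation one := (@tg_one G).
Hypothesis pr : prime p.
Hypothesis Fsub : is_subgroup F.
Hypothesis Fnorm : forall x n, F n -> F (x ** n ** x^^-1).
Hypothesis Ccent : forall t : G, torsion t -> t <> one -> centralizer F t = [set one].
Variables (k : nat) (c : G -> 'I_(p ^ k)).
Hypothesis csurj : forall i, exists x, c x = i.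
Hypothesis cE : forall x y, c x = c y <-> F (x^^-1 ** y).

Lemma Ftors (z : G) : F z -> torsion z -> z = one.
Proof.
move=> Fz tz; have [//|nz] := pselect (z = one).
have := Ccent tz nz; move/(congr1 (fun X => X z)).
have -> : centralizer F z z = True by apply/propT; split.
by move=> h; have : [set one] z by rewrite -h.
Qed.

Lemma sub_pow (S : set G) (x : G) m : is_subgroup S -> S x -> S (tg_pow x m).
Proof.
move=> [S1 [SM SV]] Sx; elim: m => [//|m IH] /=; exact: SM.
Qed.

Lemma pigeon (S : set G) (f : nat -> G) : finite_set S -> (forall m, S (f m)) ->
  exists i j, (i < j)%N /\ f i = f j.
Proof.
move=> /finite_fsetP [X eX] hf; apply: (@pigeon_seq _ (enum_fset X)) => m.
by have := hf m; rewrite eX.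
Qed.

Lemma pow_eq_tors (x : G) i j : (i < j)%N -> tg_pow x i = tg_pow x j -> torsion x.
Proof.
move=> lij e; exists (j - i)%N; split; first by rewrite subn_gt0.
apply: (@tmulIg _ (tg_pow x i)); rewrite -tpowD subnK ?(ltnW lij) // tg_mul1g.
by rewrite e.
Qed.

Lemma tors_fin (S : set G) (x : G) : is_subgroup S -> finite_set S -> S x -> torsion x.
Proof.
move=> sS fS Sx; have [i [j [lij e]]] := @pigeon S (fun m => tg_pow x m) fS
  (fun m => sub_pow m sS Sx).
exact: pow_eq_tors lij e.
Qed.

Lemma cinj (S : set G) (x y : G) : is_subgroup S -> finite_set S -> S x -> S y ->
  c x = c y -> x = y.
Proof.
move=> sS fS Sx Sy /cE hF.
have Sxy : S (x^^-1 ** y) by case: sS => [_ [SM SV]]; apply: SM => //; apply: SV.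
have := Ftors hF (tors_fin sS fS Sxy) => e.
by rewrite -(tmulKVg x y) e tmulg1.
Qed.

Definition rep i := proj1_sig (cid (csurj i)).
Lemma repK i : c (rep i) = i.
Proof. exact: proj2_sig (cid (csurj i)). Qed.

Definition Q := 'I_(p ^ k).
HB.instance Definition _ := Finite.on Q.
Definition qmul (i j : Q) : Q := c (rep i ** rep j).
Definition qone : Q := c one.
Definition qinv (i : Q) : Q := c ((rep i)^^-1).

Lemma cM x y : c (x ** y) = qmul (c x) (c y).
Proof.
apply/cE; rewrite /qmul.
have ha := repK (c x); have hb := repK (c y).
move/esym/cE: ha; move/esym/cE: hb.
set a := rep (c x); set b := rep (c y) => Fg Ff.
have -> : a = x ** (x^^-1 ** a) by rewrite tmulKVg.
have -> : b = y ** (y^^-1 ** b) by rewrite tmulKVg.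
move: Fg Ff; set f := x^^-1 ** a; set g := y^^-1 ** b => Fg Ff.
have : F ((y^^-1 ** f ** y^^-1^^-1) ** g).
  by case: Fsub => [_ [FM _]]; apply: FM => //; apply: Fnorm.
by rewrite tinvK tinvM -!tg_mulA tmulKg.
Qed.

Lemma cV x : c (x^^-1) = qinv (c x).
Proof.
apply/cE; rewrite /qinv.
have := repK (c x); move/esym/cE; set a := rep (c x) => Ff.
have -> : a = x ** (x^^-1 ** a) by rewrite tmulKVg.
move: Ff; set f := x^^-1 ** a => Ff.
have : F (x ** f^^-1 ** x^^-1).
  by case: Fsub => [_ [_ FV]]; apply: Fnorm; apply: FV.
by rewrite tinvK tinvM -!tg_mulA.
Qed.

Lemma qmulA : associative qmul.
Proof.
move=> i j l; case: (csurj i) => x <-; case: (csurj j) => y <-.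
case: (csurj l) => z <-; by rewrite -!cM tg_mulA.
Qed.
Lemma qmul1 : left_id qone qmul.
Proof. by move=> i; case: (csurj i) => x <-; rewrite /qone -cM tg_mul1g. Qed.
Lemma qmulV : left_inverse qone qinv qmul.
Proof. by move=> i; case: (csurj i) => x <-; rewrite -cV -cM tg_mulVg. Qed.

HB.instance Definition _ := @Finite_isGroup.Build Q qmul qone qinv qmulA qmul1 qmulV.

Lemma cMg x y : ((c x : Q) * (c y : Q))%g = c (x ** y) :> Q.
Proof. by rewrite cM. Qed.
Lemma cVg x : ((c x : Q)^-1)%g = c (x^^-1) :> Q.
Proof. by rewrite cV. Qed.
Lemma c1g : (1 : Q)%g = c one.
Proof. by []. Qed.

Definition img (S : set G) : {set Q} := [set i : Q | `[< exists x, S x /\ c x = i >]].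
Lemma memimg S i : (i \in img S) <-> exists x, S x /\ c x = i.
Proof. by rewrite inE; split => [/asboolP//|h]; apply/asboolP. Qed.

Lemma img_group S : is_subgroup S -> group_set (img S).
Proof.
move=> [S1 [SM SV]]; apply/group_setP; split.
  by apply/memimg; exists one.
move=> i j /memimg [x [Sx <-]] /memimg [y [Sy <-]]; apply/memimg.
by exists (x ** y); split; [exact: SM | rewrite cMg].
Qed.

Lemma norm_grow (S D : set G) : is_subgroup S -> finite_set S -> is_subgroup D ->
  D `<=` S -> ~ (S `<=` D) ->
  exists s, S s /\ ~ D s /\
    (forall e, D e -> D (s ** e ** s^^-1) /\ D (s^^-1 ** e ** s)).
Proof.
move=> sS fS sD DS nSD.
have [_ [SM SV]] := sS.
pose HS := Group (img_group sS); pose HD := Group (img_group sD).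
have sub : HD \subset HS.
  apply/fintype.subsetP => i /memimg [x [Dx <-]]; apply/memimg; exists x; split => //.
  exact: DS.
have [x [Sx nDx]] : exists x, S x /\ ~ D x.
  apply: contrapT => h; apply: nSD => y Sy; apply: contrapT => nDy; apply: h.
  by exists y.
have prop : HD \proper HS.
  apply/properP; split => //; exists (c x); first by apply/memimg; exists x.
  apply/negP => /memimg [y [Dy e]]; apply: nDx.
  by rewrite -(cinj sS fS (DS _ Dy) Sx e).
have pQ : pgroup p [set: Q]%SET by rewrite /pgroup cardsT card_ord pnatX pnat_id.
have pS : pgroup p HS := pgroupS (finset.subsetT _) pQ.
have := nilpotent_proper_norm (pgroup_nil pS) prop.
case/properP => _ [i /setIP [iS iN] iD].
case/memimg: iS => s [Ss ei]; exists s; split => //; split.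
  by move=> Ds; apply: (negP iD); apply/memimg; exists s.
move=> e De; have Se := DS _ De; split.
  have : (((c e : Q) ^ (i^-1))%g \in HD) by rewrite memJ_norm ?groupV //; apply/memimg; exists e.
  rewrite -ei conjgE invgK cVg (cMg e) cMg => /memimg [e' [De' ee']].
  have Sc : S (s ** e ** s^^-1) := SM _ _ (SM _ _ Ss Se) (SV _ Ss).
  by rewrite -(cinj sS fS (DS _ De') Sc) // ee' tg_mulA.
have : (((c e : Q) ^ i)%g \in HD) by rewrite memJ_norm //; apply/memimg; exists e.
rewrite -ei conjgE cVg (cMg e) cMg => /memimg [e' [De' ee']].
have Sc : S (s^^-1 ** e ** s) := SM _ _ (SM _ _ (SV _ Ss) Se) Ss.
by rewrite -(cinj sS fS (DS _ De') Sc) // ee' tg_mulA.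
Qed.

Lemma normF (D : set G) (d f : G) : is_subgroup D -> finite_set D -> D d -> d <> one ->
  F f -> (forall e, D e -> D (f ** e ** f^^-1)) -> f = one.
Proof.
move=> sD fD Dd nd Ff fN.
pose g m := tg_pow f m ** d ** (tg_pow f m)^^-1.
have Dg : forall m, D (g m).
  elim=> [|m IH]; first by rewrite /g /= tinv1 tmulg1 tg_mul1g.
  have -> : g m.+1 = f ** g m ** f^^-1 by rewrite /g /= tinvM !tg_mulA.
  exact: fN.
have [i [j [lij e]]] := @pigeon D g fD Dg.
set u := tg_pow f (j - i).
have pj : tg_pow f j = u ** tg_pow f i by rewrite -tpowD subnK // ltnW.
have gj : g j = u ** g i ** u^^-1 by rewrite /g pj tinvM !tg_mulA.
have comm : u ** g i = g i ** u by rewrite {2}e gj tmulgKV.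
have gi1 : g i <> one.
  move=> h; apply: nd.
  have -> : d = (tg_pow f i)^^-1 ** g i ** tg_pow f i.
    by rewrite /g -!tg_mulA tmulKg tg_mulVg tmulg1.
  by rewrite h tmulg1 tg_mulVg.
have tgi := tors_fin sD fD (Dg i).
have Fu : F u := sub_pow (j - i) Fsub Ff.
have := Ccent tgi gi1 => /(congr1 (fun X => X u)).
have -> : centralizer F (g i) u = True by apply/propT; split.
move=> h; have u1 : u = one by have : [set one] u by rewrite -h.
apply: Ftors Ff _; exists (j - i)%N; split; [by rewrite subn_gt0 | exact: u1].
Qed.

Lemma step (A S : set G) (d : G) : maximal_finite_subgroup A -> finite_subgroup S ->
  ~ (S `<=` A) -> A d -> S d -> d <> one ->
  exists M, finite_subgroup M /\ ~ (M `<=` A) /\ M d /\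
    (#|img (A `&` S)| < #|img (A `&` M)|)%N.
Proof.
move=> [[sA fA] maxA] [sS fS] nSA Ad Sd nd.
have [A1 [AM AV]] := sA; have [S1 [SM SV]] := sS.
set D := A `&` S.
have sD : is_subgroup D.
  split; first by split.
  split; first by move=> x y [Ax Sx] [Ay Sy]; split; [apply: (AM) | apply: (SM)].
  by move=> x [Ax Sx]; split; [apply: (AV) | apply: (SV)].
have fD : finite_set D by apply: finite_setIl.
have nAD : ~ (A `<=` D).
  move=> h; apply: nSA.
  have AS : A `<=` S by move=> x Ax; exact: (h x Ax).2.
  by rewrite (maxA S (conj sS fS) AS).
have nSD : ~ (S `<=` D) by move=> h; apply: nSA => x Sx; exact: (h x Sx).1.
have [a [Aa [nDa Na]]] := norm_grow sA fA sD (fun x Dx => Dx.1) nAD.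
have [s [Ss [nDs Ns]]] := norm_grow sS fS sD (fun x Dx => Dx.2) nSD.
pose M := [set x | forall e, D e -> D (x ** e ** x^^-1) /\ D (x^^-1 ** e ** x)].
have sM : is_subgroup M.
  split; first by move=> e De; rewrite tinv1 tmulg1 tg_mul1g.
  split.
    move=> x y Mx My e De; have [h1 h2] := My e De.
    have [h3 _] := Mx _ h1; have [_ h4] := Mx _ De.
    have [_ h5] := My _ h4.
    split; first by move: h3; rewrite tinvM !tg_mulA.
    by move: h5; rewrite tinvM !tg_mulA.
  by move=> x Mx e De; have [h1 h2] := Mx e De; rewrite tinvK; split.
have [_ [DM' DV']] := sD.
have DM : D `<=` M.
  move=> x Dx e De; split; first by apply: (DM'); [apply: (DM') | apply: (DV')].
  by apply: (DM'); [apply: (DM'); [apply: (DV') |] |].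
have MF : forall f, M f -> F f -> f = one.
  by move=> f Mf Ff; apply: (normF sD fD (conj Ad Sd) nd Ff) => e De; exact: (Mf e De).1.
have [_ [MM MV]] := sM.
have cinjM : forall x y, M x -> M y -> c x = c y -> x = y.
  move=> x y Mx My /cE hF.
  have := MF _ (MM _ _ (MV _ Mx) My) hF => e.
  by rewrite -(tmulKVg x y) e tmulg1.
have fM : finite_set M.
  pose g (i : Q) := match pselect (exists x, M x /\ c x = i) with
    | left h => proj1_sig (cid h) | right _ => one end.
  apply: (@sub_finite_set _ M (g @` setT)); last exact: finite_image finite_finset.
  move=> x Mx; exists (c x) => //; rewrite /g.
  case: pselect => [h|[]]; last by exists x.
  have [My ey] := proj2_sig (cid h).
  exact: cinjM My Mx ey.
exists M; split; first by [].
split; first by move=> h; apply: nDs; split => //; apply: h; apply: Ns.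
split; first by apply: DM; split.
apply: proper_card; apply/properP; split.
  apply/fintype.subsetP => i /memimg [x [[Ax Sx] <-]]; apply/memimg.
  by exists x; split => //; split => //; apply: DM.
exists (c a); first by apply/memimg; exists a; split => //; split => //; apply: Na.
apply/negP => /memimg [e [De ee]]; apply: nDa.
by rewrite -(cinj sA fA De.1 Aa ee).
Qed.

Lemma key (A : set G) : maximal_finite_subgroup A -> forall n (S : set G),
  (p ^ k - #|img (A `&` S)| <= n)%N -> finite_subgroup S -> ~ (S `<=` A) ->
  forall d, A d -> S d -> d = one.
Proof.
move=> mA; elim=> [|n IH] S hn fS nSA d Ad Sd; apply: contrapT => nd;
  have [M [fM [nMA [Md lt]]]] := step mA fS nSA Ad Sd nd.
  have le : (#|img (A `&` M)| <= p ^ k)%N by rewrite -[X in (_ <= X)%N](card_ord (p ^ k)); exact: max_card.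
  move: hn lt le; lia.
apply: nd; apply: (IH M) => //.
have le : (#|img (A `&` M)| <= p ^ k)%N by rewrite -[X in (_ <= X)%N](card_ord (p ^ k)); exact: max_card.
move: hn lt le; lia.
Qed.

Lemma final (A B : set G) : maximal_finite_subgroup A -> maximal_finite_subgroup B ->
  A <> B -> A `&` B = [set one].
Proof.
move=> mA mB nAB; apply/seteqP; split.
  move=> x [Ax Bx]; apply: (key mA (n := p ^ k)) Ax Bx => //.
  - by rewrite leq_subr.
  - by case: mB.
  - move=> BA; apply: nAB; have [fA _] := mA; have [_ maxB] := mB.
    exact: maxB A fA BA.
move=> x ->; split; [by case: mA => [[[]]] | by case: mB => [[[]]]].
Qed.

End Main.

Unset Implicit Arguments.
Theorem mainTheorem6 (p : nat) (G : TopGroup) (F : set G) :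
  prime p ->
  virtually_free_pro_p p G ->
  is_subgroup F -> open F -> normal_sub F [set: G] -> free_pro_p_sub p F ->
  (forall t : G, torsion t -> t <> tg_one -> centralizer F t = [set tg_one]) ->
  forall A B : set G, maximal_finite_subgroup A -> maximal_finite_subgroup B ->
  A <> B -> A `&` B = [set tg_one].
Proof.
move=> pr [[_ [_ [_ proP]]] _] Fsub oF nF _ Ccent.
have ro : rel_open [set: G] F by exists F; split => //; rewrite setTI.
have [k [c [csurj cE]]] := proP F nF ro.
have Fnorm : forall x n : G, F n -> F (tg_mul (tg_mul x n) (tg_inv x)).
  by move=> x n Fn; case: nF => _ [_ h]; apply: h.
apply: (final pr Fsub Fnorm Ccent (k := k) (c := c)).
  by move=> i; have [x [_ e]] := csurj i; exists x.
by move=> x y; apply: cE.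
Qed.
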